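(* Let $R$ be a monad on Sets and $LM$ a left $R$-module with values in Sets. A pair of subsets $C\subset\coprod_{n\ge0}\prod_{i=0}^{n-1}LM([i])$ and $\widetilde{C}\subset\coprod_{n\ge0}(\prod_{i=0}^{n}LM([i]))\times R([n])$ corresponds to a C-subsystem of $CC(R,LM)$ (i.e. there is a C-subsystem $CC$ with $Ob(CC)=C$ and $\widetilde{Ob}(CC)=\widetilde{C}$) if and only if the following conditions hold, for all sequences and elements for which the expressions are well formed (with $n=l(\Gamma)$ throughout): (1) $(\rhd_C)$, i.e. the empty sequence is in $C$; (2) $(\Gamma,T\rhd_C)\Rightarrow(\Gamma\rhd_C)$; (3) $(\Gamma\vdash_{\widetilde C}r:R)\Rightarrow(\Gamma,R\rhd_C)$; (4) $(\Gamma,T\rhd_C)\wedge(\Gamma,\Delta\vdash_{\widetilde C}r:R)\Rightarrow(\Gamma,T,t_{n+1}(\Delta)\vdash_{\widetilde C}t_{n+1}(r):t_{n+1}(R))$; (5) $(\Gamma\vdash_{\widetilde C}s:S)\wedge(\Gamma,S,\Delta\vdash_{\widetilde C}r:R)\Rightarrow(\Gamma,s_{n+1}(\Delta[s/n+1])\vdash_{\widetilde C}s_{n+1}(r[s/n+1]):s_{n+1}(R[s/n+1]))$; (6) $(\Gamma,T\rhd_C)\Rightarrow(\Gamma,T\vdash_{\widetilde C}n+1:t_{n+1}(T))$.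
   Context: Notation: $[n]=\{1,\dots,n\}$. $R$ is a monad on Sets given by $\eta_X:X\to R(X)$ and $\mathrm{bind}(f):R(X)\to R(Y)$ for $f:X\to R(Y)$ (with $\mathrm{bind}(\eta_X)=\mathrm{id}$, $\mathrm{bind}(f)\circ\eta_X=f$, $\mathrm{bind}(\mathrm{bind}(g)\circ f)=\mathrm{bind}(g)\circ\mathrm{bind}(f)$); $LM$ is a left $R$-module: a functor with maps $\rho(f):LM(X)\to LM(Y)$, $\rho(\eta_X)=\mathrm{id}$, $\rho(g)\circ\rho(f)=\rho(\mathrm{bind}(g)\circ f)$. Elements of $Y$ are regarded in $R(Y)$ via $\eta_Y$. For $E\in LM([m])$ (resp. $R([m])$), $E(f_1/1,\dots,f_m/m)$ means $\rho(f)(E)$ (resp. $\mathrm{bind}(f)(E)$) with $f(i)=f_i$. For $E\in LM([m])$ or $R([m])$ with $m\ge n$: $t_{n+1}(E):=E(1/1,\dots,n/n,n+2/n+1,\dots,m+1/m)\in LM([m+1])$ (resp. $R([m+1])$). For $m\ge n+1$ and $s\in R([n])$ (regarded in $R([m-1])$ via $[n]\subset[m-1]$): $s_{n+1}(E[s/n+1]):=E(1/1,\dots,n/n,s/n+1,n+1/n+2,\dots,m-1/m)\in LM([m-1])$ (resp. $R([m-1])$). These are applied componentwise to sequences $\Delta=(D_1,\dots,D_k)$. $CC(R,LM)$: objects are sequences $\Gamma=(T_1,\dots,T_n)$ with $T_i\in LM([i-1])$, $l(\Gamma)=n$, $ft(T_1,\dots,T_n)=(T_1,\dots,T_{n-1})$,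 $pt=()$; morphisms $(E_1,\dots,E_m)\to(T_1,\dots,T_n)$ are elements of $R([m])^n$, the composite of $f=(f_1,\dots,f_n)$ followed by $g=(g_1,\dots,g_k)$ being $(g_j(f_1/1,\dots,f_n/n))_j$, identities $(1,\dots,n)$; $p_X=(1,\dots,n):(T_1,\dots,T_{n+1})\to(T_1,\dots,T_n)$; for $X=(T_1,\dots,T_{n+1})$ and $f=(f_1,\dots,f_n):(R_1,\dots,R_m)\to ft(X)$, $f^*X=(R_1,\dots,R_m,T_{n+1}(f_1/1,\dots,f_n/n))$ and $q(f,X)=(f_1,\dots,f_n,m+1)$. $\widetilde{Ob}$ of a subcategory is its set of morphisms $s:ft(X)\to X$ with $l(X)>0$, $p_X\circ s=\mathrm{id}$; the section $(1,\dots,n,t):(T_1,\dots,T_n)\to(T_1,\dots,T_n,T)$ ($T\in LM([n])$, $t\in R([n])$) is identified with the sequence $(T_1,\dots,T_n,T,t)$. A C-subsystem of $CC(R,LM)$ is a subcategory $CC$ containing $pt$ such that for every object $X$ of $CC$ with $l(X)>0$: $ft(X)$ and $p_X$ are in $CC$; for every morphism $f:Y\to ft(X)$ of $CC$, $f^*X$ and $q(f,X)$ are in $CC$; and for every morphism $f:Y\to X$ of $CC$ the unique morphism $s_f:Y\to(p_X\circ f)^*X$ with $p\circ s_f=\mathrm{id}_Y$ and $q(p_X\circ f,X)\circ s_f=f$ is in $CC$. Notation: $(T_1,\dots,T_n\rhd_C)$ means $(T_1,\dots,T_n)\in C$; for $\Gamma=(T_1,\dots,T_n)$, $T\in LM([n])$,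 $t\in R([n])$, $(\Gamma\vdash_{\widetilde C}t:T)$ means $(T_1,\dots,T_n,T,t)\in\widetilde C$. Commas denote concatenation of sequences; $\Delta$ may be empty. *)

(* Defs.v *)
From mathcomp Require Import all_boot.

Set Implicit Arguments.
Unset Strict Implicit.
Unset Printing Implicit Defensive.

(* Monads on Sets, in Kleisli form (Sets = Type; laws stated pointwise) *)
Record monad := Monad {
  mon :> Type -> Type;
  ret : forall X : Type, X -> mon X;
  bind : forall X Y : Type, (X -> mon Y) -> mon X -> mon Y;
  bind_ret : forall X (x : mon X), bind (@ret X) x = x;
  bind_retr : forall X Y (f : X -> mon Y) (x : X), bind f (ret x) = f x;
  bind_bind : forall X Y Z (f : X -> mon Y) (g : Y -> mon Z) (x : mon X),
      bind (fun a => bind g (f a)) x = bind g (bind f x)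
}.
Arguments ret {m X} x.
Arguments bind {m X Y} f x.

Record lmodule (R : monad) := LModule {
  lmod :> Type -> Type;
  act : forall X Y : Type, (X -> R Y) -> lmod X -> lmod Y;
  act_ret : forall X (E : lmod X), act (@ret R X) E = E;
  act_act : forall X Y Z (f : X -> R Y) (g : Y -> R Z) (E : lmod X),
      act g (act f E) = act (fun a => bind g (f a)) E
}.
Arguments act {R l X Y} f E.

Section CCRLM.
Variables (R : monad) (LM : lmodule R).

(* [n] = {1,...,n} is represented by 'I_n = {0,...,n-1}: paper position k is
   the ordinal k-1. *)

(* Objects of CC(R,LM): sequences (T_1,...,T_n), T_i in LM([i-1]). *)
Inductive ctx : nat -> Type :=
| cnil : ctx 0
| csnoc n : ctx n -> LM 'I_n -> ctx n.+1.

(* Morphisms (E_1..E_m) -> (T_1..T_n): elements of R([m])^n. *)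
Definition mor (m n : nat) : Type := 'I_n -> R 'I_m.

Definition idmor n : mor n n := fun i => ret i.
Arguments idmor : clear implicits.

Definition comp m n k (g : mor n k) (f : mor m n) : mor m k :=
  fun j => bind f (g j).

Definition incl n : 'I_n -> 'I_n.+1 := widen_ord (leqnSn n).

Definition pmor n : mor n.+1 n := fun i => ret (incl i).
Arguments pmor : clear implicits.

Definition qmor m n (f : mor m n) : mor m.+1 n.+1 :=
  fun i => match unlift ord_max i with
           | Some j => bind (fun k => ret (incl k)) (f j)
           | None => ret ord_max
           end.

Record is_Csubsystem (Ob : forall n, ctx n -> Prop)
    (Hom : forall m n, ctx m -> ctx n -> mor m n -> Prop) : Prop := {
  cs_hom_src : forall m n (X : ctx m) (Y : ctx n) f, Hom m n X Y f -> Ob m X;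
  cs_hom_tgt : forall m n (X : ctx m) (Y : ctx n) f, Hom m n X Y f -> Ob n Y;
  cs_id : forall n (X : ctx n), Ob n X -> Hom n n X X (idmor n);
  cs_comp : forall m n k (X : ctx m) (Y : ctx n) (Z : ctx k) f g,
      Hom m n X Y f -> Hom n k Y Z g -> Hom m k X Z (comp g f);
  cs_pt : Ob 0 cnil;
  cs_ft : forall n (G : ctx n) T, Ob n.+1 (csnoc G T) -> Ob n G;
  cs_p : forall n (G : ctx n) T, Ob n.+1 (csnoc G T) ->
      Hom n.+1 n (csnoc G T) G (pmor n);
  cs_pull : forall n (G : ctx n) T m (Y : ctx m) (f : mor m n),
      Ob n.+1 (csnoc G T) -> Hom m n Y G f -> Ob m.+1 (csnoc Y (act f T));
  cs_q : forall n (G : ctx n) T m (Y : ctx m) (f : mor m n),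
      Ob n.+1 (csnoc G T) -> Hom m n Y G f ->
      Hom m.+1 n.+1 (csnoc Y (act f T)) (csnoc G T) (qmor f);
  (* s_f : Y -> (p_X o f)^*X, characterised by p o s_f = id, q(p_X o f, X) o s_f = f *)
  cs_s : forall n (G : ctx n) T m (Y : ctx m) (f : mor m n.+1),
      Ob n.+1 (csnoc G T) -> Hom m n.+1 Y (csnoc G T) f ->
      forall s : mor m m.+1,
        comp (pmor m) s = idmor m ->
        comp (qmor (comp (pmor n) f)) s = f ->
        Hom m m.+1 Y (csnoc Y (act (comp (pmor n) f) T)) s
}.

(* \tilde Ob(CC): sections s : ft(X) -> X in CC with p_X o s = id, identified
   with (T_1,..,T_n,T,t) where t is the last component of s. *)
Definition Obtilde (Hom : forall m n, ctx m -> ctx n -> mor m n -> Prop)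
    n (G : ctx n) (T : LM 'I_n) (t : R 'I_n) : Prop :=
  exists s : mor n n.+1,
    [/\ Hom n n.+1 G (csnoc G T) s, comp (pmor n) s = idmor n & s ord_max = t].

(* t_{n+1}: renaming i |-> i (i <= n), i |-> i+1 (i > n)  (paper, 1-indexed);
   0-indexed this is bump n. *)
Definition wkI (n m : nat) (i : 'I_m) : 'I_m.+1 := inord (bump n i).
Definition wkLM (n : nat) m (E : LM 'I_m) : LM 'I_m.+1 :=
  act (fun i => ret (wkI n i)) E.
Definition wkR (n : nat) m (r : R 'I_m) : R 'I_m.+1 :=
  bind (fun i => ret (wkI n i)) r.

(* s_{n+1}(E[s/n+1]) for E over [m+1] (m >= n):
   E(1/1,..,n/n, s/n+1, n+1/n+2, .., m/m+1), s regarded in R([m]) via [n] in [m].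
   0-indexed: i <> n |-> unbump n i, i = n |-> s. *)
Definition substI (n m : nat) (H : n <= m) (s : R 'I_n) (i : 'I_m.+1) : R 'I_m :=
  match unlift (@Ordinal m.+1 n H) i with
  | Some j => ret j
  | None => bind (fun j => ret (widen_ord H j)) s
  end.
Definition substLM n m (H : n <= m) (s : R 'I_n) (E : LM 'I_m.+1) : LM 'I_m :=
  act (substI H s) E.
Definition substR n m (H : n <= m) (s : R 'I_n) (r : R 'I_m.+1) : R 'I_m :=
  bind (substI H s) r.

(* weakctx G T Th Th'  <->  Th = (G,Delta) and Th' = (G,T,t_{n+1}(Delta))
   for some (possibly empty) Delta. *)
Inductive weakctx n (G : ctx n) (T : LM 'I_n) : forall m, ctx m -> ctx m.+1 -> Prop :=
| weak_nil : @weakctx n G T n G (csnoc G T)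
| weak_snoc m (Th : ctx m) (Th' : ctx m.+1) (D : LM 'I_m) :
    @weakctx n G T m Th Th' ->
    @weakctx n G T m.+1 (csnoc Th D) (csnoc Th' (wkLM n D)).

(* substctx G S s Th Th'  <->  Th = (G,S,Delta) and
   Th' = (G, s_{n+1}(Delta[s/n+1])) for some (possibly empty) Delta. *)
Inductive substctx n (G : ctx n) (S : LM 'I_n) (s : R 'I_n) :
    forall m, ctx m.+1 -> ctx m -> Prop :=
| subst_nil : @substctx n G S s n (csnoc G S) G
| subst_snoc m (H : n <= m) (Th : ctx m.+1) (Th' : ctx m) (D : LM 'I_m.+1) :
    @substctx n G S s m Th Th' ->
    @substctx n G S s m.+1 (csnoc Th D) (csnoc Th' (substLM H s D)).

End CCRLM.

Arguments cnil {R LM}.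

(* Main.v *)
From Stdlib Require Import FunctionalExtensionality.
Require Import Defs.
From mathcomp Require Import all_boot zify.

Set Implicit Arguments. Unset Strict Implicit. Unset Printing Implicit Defensive.

Section Gen.
Variables (R : monad) (LM : lmodule R).

Lemma bind_ext X Y (f g : X -> R Y) r : (forall x, f x = g x) -> bind f r = bind g r.
Proof. by move=> H; rewrite (functional_extensionality _ _ H). Qed.
Lemma act_ext X Y (f g : X -> R Y) (E : LM X) : (forall x, f x = g x) -> act f E = act g E.
Proof. by move=> H; rewrite (functional_extensionality _ _ H). Qed.

Lemma wkI_incl n (i : 'I_n) : wkI n i = incl i.
Proof.
apply: val_inj => /=; rewrite /wkI /bump; have /negbTE -> : ~~ (n <= i) by rewrite -ltnNge. rewrite add0n inordK //.
by apply: leq_trans (ltn_ord i) _.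
Qed.

Lemma lift_max_incl n (j : 'I_n) : lift ord_max j = incl j.
Proof. by apply: val_inj => /=; rewrite /bump leqNgt ltn_ord. Qed.

Lemma unlift_incl n (j : 'I_n) : unlift ord_max (incl j) = Some j.
Proof. by rewrite -lift_max_incl liftK. Qed.

Definition secof m n (f : mor R m n.+1) : mor R m m.+1 :=
  fun i => match unlift ord_max i with Some j => ret j | None => f ord_max end.

Lemma secof_p m n (f : mor R m n.+1) : Defs.comp (@pmor R m) (secof f) = @idmor R m.
Proof.
apply: functional_extensionality => i.
by rewrite /Defs.comp /pmor bind_retr /secof unlift_incl.
Qed.

Lemma secof_q m n (f : mor R m n.+1) :
  Defs.comp (qmor (Defs.comp (@pmor R n) f)) (secof f) = f.
Proof.
apply: functional_extensionality => i.
rewrite /Defs.comp /qmor; case: (unliftP ord_max i) => [j ->|->].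
  rewrite /pmor bind_retr -bind_bind.
  rewrite (@bind_ext _ _ _ (@ret R _)) ?bind_ret ?lift_max_incl //.
  by move=> k; rewrite bind_retr /secof unlift_incl.
by rewrite bind_retr /secof unlift_none.
Qed.

Lemma secof_last m n (f : mor R m n.+1) : secof f ord_max = f ord_max.
Proof. by rewrite /secof unlift_none. Qed.

Lemma substI_incl n m (H : n <= m) (H' : n <= m.+1) (s : R 'I_n) (k : 'I_m.+1) :
  substI H' s (incl k) = bind (fun x => ret (incl x)) (substI H s k).
Proof.
rewrite /substI.
case: (unliftP (@Ordinal m.+1 n H) k) => [j ->|->].
  have -> : incl (lift (@Ordinal m.+1 n H) j) = lift (@Ordinal m.+2 n H') (incl j) by apply: val_inj.
  by rewrite liftK bind_retr.
have -> : incl (@Ordinal m.+1 n H) = @Ordinal m.+2 n H' by apply: val_inj.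
rewrite unlift_none -bind_bind; apply: bind_ext => x; rewrite bind_retr.
by congr ret; apply: val_inj.
Qed.

Lemma substI_max n m (H' : n <= m.+1) (s : R 'I_n) : n <= m ->
  substI H' s ord_max = ret ord_max.
Proof.
move=> Hnm; rewrite /substI.
have -> : (ord_max : 'I_m.+2) = lift (@Ordinal m.+2 n H') ord_max.
  by apply: val_inj => /=; rewrite /bump Hnm.
by rewrite liftK.
Qed.

Lemma qmor_substI n m (H : n <= m) (H' : n <= m.+1) (s : R 'I_n) (i : 'I_m.+2) :
  qmor (substI H s) i = substI H' s i.
Proof.
rewrite /qmor; case: (unliftP ord_max i) => [j ->|->].
  by rewrite lift_max_incl (substI_incl H).
by rewrite substI_max.
Qed.

Lemma incl_wkI n p (k : 'I_p) : n <= p -> incl (wkI n k) = wkI n (incl k).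
Proof.
move=> Hn; apply: val_inj => /=; rewrite /wkI /= !inordK //.
  by have := ltn_ord k; rewrite /bump; case: (n <= k) => /=; lia.
by have := ltn_ord k; rewrite /bump; case: (n <= k) => /=; lia.
Qed.

Lemma wkI_max n p : n <= p -> wkI n (ord_max : 'I_p.+1) = ord_max.
Proof. by move=> Hn; apply: val_inj => /=; rewrite /wkI /bump Hn inordK. Qed.

Lemma qmor_wkI n p (i : 'I_p.+1) : n <= p ->
  qmor (fun k : 'I_p => ret (wkI n k) : R 'I_p.+1) i = ret (wkI n i).
Proof.
move=> Hn; rewrite /qmor; case: (unliftP ord_max i) => [j ->|->].
  by rewrite bind_retr lift_max_incl incl_wkI.
by rewrite wkI_max.
Qed.


Definition mor0 m : mor R m 0 :=
  fun i => False_rect _ (Bool.diff_false_true (etrans (esym (ltn0 i)) (ltn_ord i))).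

Inductive sub_ext m n (X : ctx LM m) (Y : ctx LM n) (f : mor R m n) :
    forall p q, ctx LM p -> ctx LM q -> mor R p q -> Prop :=
| se_nil : sub_ext X Y f X Y f
| se_snoc p q (P : ctx LM p) (Q : ctx LM q) g D :
    sub_ext X Y f P Q g -> sub_ext X Y f (csnoc P (act g D)) (csnoc Q D) (qmor g).

Inductive idrel : forall p q, ctx LM p -> ctx LM q -> mor R p q -> Prop :=
| idrel_i p (P : ctx LM p) g : (forall i, g i = ret i) -> idrel P P g.

Lemma se_idrel (f : mor R 0 0) p q (P : ctx LM p) (Q : ctx LM q) g :
  sub_ext cnil cnil f P Q g -> idrel P Q g.
Proof.
elim => [|p' q' P' Q' g' D _ IH].
  by apply: idrel_i => -[k Hk]; exfalso; move: Hk; rewrite ltn0.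
move: D; case: IH => p0 P0 g0 Hg D.
rewrite (act_ext _ Hg) act_ret; apply: idrel_i => i.
rewrite /qmor; case: (unliftP ord_max i) => [j ->|->] //.
by rewrite Hg bind_retr lift_max_incl.
Qed.

Lemma dec_weak m (X : ctx LM m) U (f : mor R m.+1 0) p q (P : ctx LM p)
    (Q : ctx LM q) g :
  sub_ext (csnoc X U) cnil f P Q g ->
  match p return ctx LM p -> mor R p q -> Prop with
  | 0 => fun _ _ => False
  | p1.+1 => fun P g => exists (P1 : ctx LM p1) (g1 : mor R p1 q),
      [/\ sub_ext X cnil (mor0 m) P1 Q g1, weakctx X U P1 P, m <= p1 &
          forall i, g i = bind (fun k => ret (wkI m k)) (g1 i)]
  end P g.
Proof.
elim => [|p' q' P' Q' g' D _ IH] /=.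
  exists X, (mor0 m); split => //; first exact: se_nil; first exact: weak_nil.
  by case=> k Hk; exfalso; move: Hk; rewrite ltn0.
case: p' P' g' D IH => [//|p1] P' g' D [P1 [g1 [Hs Hw Hle Hg]]].
exists (csnoc P1 (act g1 D)), (qmor g1); split.
- exact: se_snoc.
- have -> : act g' D = wkLM m (act g1 D).
    by rewrite /wkLM act_act; apply: act_ext.
  exact: weak_snoc.
- exact: leqW.
move=> i; rewrite /qmor; case: (unliftP ord_max i) => [j _|_].
  rewrite Hg -!bind_bind; apply: bind_ext => k.
  by rewrite !bind_retr incl_wkI.
by rewrite bind_retr wkI_max.
Qed.

Lemma substI_nn n (H : n <= n) (s : R 'I_n) (k : 'I_n) : substI H s (incl k) = ret k.
Proof.
rewrite /substI.
have -> : incl k = lift (@Ordinal n.+1 n H) k.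
  by apply: val_inj => /=; rewrite /bump leqNgt ltn_ord.
by rewrite liftK.
Qed.

Lemma dec_subst n (Y : ctx LM n) T m (X : ctx LM m) (f : mor R m n.+1) p q
    (P : ctx LM p) (Q : ctx LM q) g :
  sub_ext X (csnoc Y T) f P Q g ->
  exists (P1 : ctx LM p.+1) (g1 : mor R p.+1 q),
    [/\ sub_ext X Y (fun i => f (incl i)) P1 Q g1,
        substctx X (act (fun i => f (incl i)) T) (f ord_max) P1 P, m <= p &
        forall (H : m <= p) i, g i = bind (substI H (f ord_max)) (g1 i)].
Proof.
elim => [|p' q' P' Q' g' D _ [P1 [g1 [Hs Hsub Hle Hg]]]].
  exists (csnoc X (act (fun i => f (incl i)) T)), (qmor (fun i => f (incl i))).
  split => //.
  - exact: (se_snoc _ (se_nil _ _ _)).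
  - exact: subst_nil.
  move=> H i; rewrite /qmor; case: (unliftP ord_max i) => [j ->|->].
    rewrite -bind_bind lift_max_incl.
    rewrite (@bind_ext _ _ _ (@ret R _)) ?bind_ret // => k.
    by rewrite bind_retr substI_nn.
  rewrite bind_retr /substI.
  have -> : (ord_max : 'I_m.+1) = @Ordinal m.+1 m H by apply: val_inj.
  rewrite unlift_none (@bind_ext _ _ _ (@ret R _)) ?bind_ret //.
  by move=> x; congr ret; apply: val_inj.
exists (csnoc P1 (act g1 D)), (qmor g1); split.
- exact: se_snoc.
- have -> : act g' D = substLM Hle (f ord_max) (act g1 D).
    by rewrite /substLM act_act; apply: act_ext => x; rewrite (Hg Hle).
  exact: subst_snoc.
- exact: leqW.
move=> H' i; rewrite /qmor; case: (unliftP ord_max i) => [j _|_].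
  rewrite (Hg Hle) -!bind_bind; apply: bind_ext => k.
  by rewrite bind_retr (substI_incl Hle).
by rewrite bind_retr substI_max.
Qed.

End Gen.

Unset Implicit Arguments.
Section Back.
Variables (R : monad) (LM : lmodule R).
Variables (C : forall n, ctx LM n -> Prop)
    (Ct : forall n, ctx LM n -> LM 'I_n -> R 'I_n -> Prop).
Set Implicit Arguments.
Hypothesis h1 : C 0 cnil.
Hypothesis h2 : forall n (G : ctx LM n) T, C n.+1 (csnoc G T) -> C n G.
Hypothesis h3 : forall n (G : ctx LM n) A a, Ct n G A a -> C n.+1 (csnoc G A).
Hypothesis h4 : forall n (G : ctx LM n) T m (Th : ctx LM m) (Th' : ctx LM m.+1) A a,
                   C n.+1 (csnoc G T) -> weakctx G T Th Th' -> Ct m Th A a ->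
                   Ct m.+1 Th' (wkLM n A) (wkR n a).
Hypothesis h5 : forall n (G : ctx LM n) S s m (H : n <= m)
                   (Th : ctx LM m.+1) (Th' : ctx LM m) A a,
                   Ct n G S s -> substctx G S s Th Th' -> Ct m.+1 Th A a ->
                   Ct m Th' (substLM H s A) (substR H s a).
Hypothesis h6 : forall n (G : ctx LM n) T, C n.+1 (csnoc G T) ->
                   Ct n.+1 (csnoc G T) (wkLM n T) (ret ord_max).

Fixpoint typed m (X : ctx LM m) n (Y : ctx LM n) : mor R m n -> Prop :=
  match Y in ctx _ n return mor R m n -> Prop with
  | cnil => fun _ => True
  | @csnoc _ _ n' Y' T => fun f => typed X Y' (fun i => f (incl i)) /\
        Ct m X (act (fun i => f (incl i)) T) (f ord_max)
  end.

Lemma typed_ext m (X : ctx LM m) n (Y : ctx LM n) f g :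
  (forall i, f i = g i) -> typed X Y f -> typed X Y g.
Proof. by move=> H; rewrite (functional_extensionality _ _ H). Qed.

Lemma Ct_C n (G : ctx LM n) A a : Ct n G A a -> C n G.
Proof. by move/h3/h2. Qed.

Lemma Ct_weak m (X : ctx LM m) U A a : C m.+1 (csnoc X U) -> Ct m X A a ->
  Ct m.+1 (csnoc X U) (act (fun i => ret (incl i)) A)
     (bind (fun i => ret (incl i)) a).
Proof.
move=> HC HA; have := h4 HC (weak_nil X U) HA.
rewrite /wkLM /wkR (act_ext _ (fun i => congr1 ret (wkI_incl i))).
by rewrite (bind_ext _ (fun i => congr1 ret (wkI_incl i))).
Qed.

Lemma typed_weak n (Y : ctx LM n) m (X : ctx LM m) U f :
  C m.+1 (csnoc X U) -> typed X Y f ->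
  typed (csnoc X U) Y (fun i => bind (fun k => ret (incl k)) (f i)).
Proof.
move=> HC; elim: Y f => [//|n' Y' IH T] f /= [Hf Ht]; split; first exact: IH.
have := Ct_weak HC Ht; rewrite act_act //.
Qed.

Lemma typed_id n (X : ctx LM n) : C n X -> typed X X (@idmor R n).
Proof.
elim: X => [//|n' X' IH U] HC /=; split.
  apply: typed_ext (typed_weak HC (IH (h2 HC))) => i.
  by rewrite bind_retr.
have := h6 HC; rewrite /wkLM (act_ext _ (fun i => congr1 ret (wkI_incl i))) //.
Qed.

Lemma core n (Y : ctx LM n) : forall m (X : ctx LM m) f, C m X -> typed X Y f ->
  forall p q (P : ctx LM p) (Q : ctx LM q) g, sub_ext X Y f P Q g ->
  forall A a, Ct q Q A a -> Ct p P (act g A) (bind g a).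
Proof.
elim: Y => [|n' Y' IHY T].
  move=> m X; elim: X => [|m' X' IHX U] f HC _ p q P Q g Hse A a HA.
    by case: (se_idrel Hse) A a HA => p0 P0 g0 Hg A a HA;
       rewrite (act_ext _ Hg) (bind_ext _ Hg) act_ret bind_ret.
  have := dec_weak Hse.
  case: p P g Hse => [|p1] P g Hse //= [P1 [g1 [Hs Hw Hle Hg]]].
  have H1 := IHX (mor0 R m') (h2 HC) I _ _ _ _ _ Hs A a HA.
  have := h4 HC Hw H1.
  rewrite /wkLM /wkR act_act -bind_bind.
  by rewrite (act_ext _ (fun i => esym (Hg i))) (bind_ext _ (fun i => esym (Hg i))).
move=> m X f HC /= [Hty Ht] p q P Q g Hse A a HA.
have [P1 [g1 [Hs Hsub Hle Hg]]] := dec_subst Hse.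
have H1 := IHY _ _ _ HC Hty _ _ _ _ _ Hs A a HA.
have := h5 Hle Ht Hsub H1.
rewrite /substLM /substR act_act -bind_bind.
by rewrite (act_ext _ (fun i => esym (Hg Hle i))) (bind_ext _ (fun i => esym (Hg Hle i))).
Qed.

Lemma typed_comp k (Z : ctx LM k) : forall n (Y : ctx LM n) m (X : ctx LM m) f g,
  C m X -> typed X Y f -> typed Y Z g -> typed X Z (Defs.comp g f).
Proof.
elim: Z => [//|k' Z' IH T] n Y m X f g HC Hf /= [Hg Hgt]; split.
  exact: (IH _ _ _ _ _ _ HC Hf Hg).
have := core HC Hf (se_nil X Y f) Hgt.
by rewrite act_act.
Qed.

Definition HomB m n (X : ctx LM m) (Y : ctx LM n) (f : mor R m n) : Prop :=
  [/\ C m X, C n Y & typed X Y f].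

Lemma typed_p n (G : ctx LM n) T : C n.+1 (csnoc G T) ->
  typed (csnoc G T) G (@pmor R n).
Proof.
move=> HC; apply: typed_ext (typed_weak HC (typed_id (h2 HC))) => i.
by rewrite bind_retr.
Qed.

Lemma pull n (G : ctx LM n) T m (Y : ctx LM m) (f : mor R m n) :
  C n.+1 (csnoc G T) -> HomB Y G f -> C m.+1 (csnoc Y (act f T)).
Proof.
move=> HC [HY HG Hf].
have := core HY Hf (se_snoc T (se_nil Y G f)) (h6 HC).
by move/Ct_C.
Qed.

Lemma isCs : is_Csubsystem C HomB.
Proof.
split.
- by move=> m n X Y f [].
- by move=> m n X Y f [].
- by move=> n X HX; split => //; apply: typed_id.
- move=> m n k X Y Z f g [HX HY Hf] [_ HZ Hg]; split => //.
  exact: typed_comp Hf Hg.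
- exact: h1.
- exact: h2.
- by move=> n G T HC; split => //; [exact: h2 HC | exact: typed_p].
- exact: pull.
- move=> n G T m Y f HC Hf; have HC' := pull HC Hf; split => //.
  case: Hf => HY HG Hf /=; split.
    apply: typed_ext (typed_weak HC' Hf) => i.
    by rewrite /qmor unlift_incl.
  have := h6 HC'; rewrite /wkLM act_act /qmor unlift_none.
  congr Ct; apply: act_ext => i; rewrite unlift_incl.
  by apply: bind_ext => k; rewrite wkI_incl.
- move=> n G T m Y f HC Hf s Hp Hq.
  have Hf' : HomB Y G (Defs.comp (@pmor R n) f).
    case: Hf => HY _ Hf; split => //; first exact: h2 HC.
    exact: typed_comp HY Hf (typed_p HC).
  have HC' := pull HC Hf'.
  case: Hf => HY _ [Hf1 Hf2]; split => //=; split.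
    apply: typed_ext (typed_id HY) => i.
    by rewrite -[LHS]/(idmor R i) -Hp /Defs.comp /pmor bind_retr.
  have -> : s ord_max = f ord_max.
    by have := congr1 (fun h => h ord_max) Hq; rewrite /Defs.comp /qmor unlift_none bind_retr.
  have Hs : forall k, s (incl k) = ret k.
    by move=> k; rewrite -[RHS]/(idmor R k) -Hp /Defs.comp /pmor bind_retr.
  rewrite act_act (act_ext _ (g := fun i => f (incl i))) //.
  by move=> i; rewrite /Defs.comp /pmor bind_retr (bind_ext _ Hs) bind_ret.
Qed.

Lemma Obt n (G : ctx LM n) T t : Obtilde HomB G T t <-> Ct n G T t.
Proof.
split.
  case=> s [[_ _ [_ Ht]] Hp <-].
  suff <- : act (fun i => s (incl i)) T = T by [].
  rewrite -[RHS]act_ret; apply: act_ext => i.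
  by rewrite -[RHS]/(idmor R i) -Hp /Defs.comp /pmor bind_retr.
move=> HT.
exists (fun i => match unlift ord_max i with Some j => ret j | None => t end).
split.
- split; [exact: Ct_C HT | exact: h3 HT |] => /=; split.
    apply: typed_ext (typed_id (Ct_C HT)) => i.
    by rewrite unlift_incl.
  rewrite unlift_none (act_ext _ (g := @ret R _)) ?act_ret // => i.
  by rewrite unlift_incl.
- apply: functional_extensionality => i.
  by rewrite /Defs.comp /pmor bind_retr unlift_incl.
- by rewrite unlift_none.
Qed.

End Back.

Section Fwd.
Variables (R : monad) (LM : lmodule R).
Unset Implicit Arguments.
Variables (Ob : forall n, ctx LM n -> Prop)
          (Hom : forall m n, ctx LM m -> ctx LM n -> mor R m n -> Prop).
Hypothesis HS : is_Csubsystem Ob Hom.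
Set Implicit Arguments.

Lemma L_sec n (G : ctx LM n) T m (Y : ctx LM m) (f : mor R m n.+1) :
  Ob n.+1 (csnoc G T) -> Hom m n.+1 Y (csnoc G T) f ->
  Hom m m.+1 Y (csnoc Y (act (Defs.comp (@pmor R n) f) T)) (secof f).
Proof. by move=> HG Hf; apply: (cs_s HS HG Hf); [apply: secof_p | apply: secof_q]. Qed.

Lemma L_pullsec m (Th : ctx LM m) A a p (Th' : ctx LM p) (w : mor R p m) :
  Obtilde Hom Th A a -> Hom p m Th' Th w -> Obtilde Hom Th' (act w A) (bind w a).
Proof.
case=> sec [Hsec Hp Hlast] Hw.
have Hcomp := cs_comp HS Hw Hsec.
have HA := cs_hom_tgt HS Hsec.
have := L_sec HA Hcomp.
have -> : Defs.comp (@pmor R m) (Defs.comp sec w) = w.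
  apply: functional_extensionality => i; rewrite /Defs.comp /pmor bind_retr.
  have := congr1 (fun h => h i) Hp; rewrite /Defs.comp /pmor /idmor bind_retr => ->.
  by rewrite bind_retr.
move=> Hs; exists (secof (Defs.comp sec w)); split => //.
  exact: secof_p.
by rewrite secof_last /Defs.comp Hlast.
Qed.

Lemma weak_hom n (G : ctx LM n) T m (Th : ctx LM m) Th' :
  weakctx G T Th Th' -> Ob n.+1 (csnoc G T) -> Ob m Th ->
  Hom m.+1 m Th' Th (fun i => ret (wkI n i)) /\ n <= m.
Proof.
elim => [|m' Th1 Th1' D Hw IH] HG HTh.
  split => //; rewrite (functional_extensionality _ _ (fun i => congr1 ret (wkI_incl i))).
  exact: (cs_p HS HG).
have [Hh Hle] := IH HG (cs_ft HS HTh).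
have := cs_q HS HTh Hh.
rewrite (functional_extensionality _ _ (fun i => @qmor_wkI R _ _ i Hle)) => H.
by split => //; apply: leqW.
Qed.

Lemma subst_hom n (G : ctx LM n) S s m (Th : ctx LM m.+1) Th' :
  substctx G S s Th Th' -> Obtilde Hom G S s -> Ob m.+1 Th ->
  forall H : n <= m, Hom m m.+1 Th' Th (substI H s).
Proof.
elim => [|m' H0 Th1 Th1' D Hsub IH] HGS HTh H.
  case: HGS => s0 [Hs0 Hp Hlast].
  suff -> : substI H s = s0 by [].
  apply: functional_extensionality => i; rewrite /substI.
  case: (unliftP (@Ordinal n.+1 n H) i) => [j ->|->].
    have -> : lift (@Ordinal n.+1 n H) j = incl j.
      by apply: val_inj => /=; rewrite /bump leqNgt ltn_ord.
    by have := congr1 (fun h => h j) Hp; rewrite /Defs.comp /pmor /idmor bind_retr => ->.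
  have -> : (@Ordinal n.+1 n H) = ord_max by apply: val_inj.
  rewrite Hlast (@bind_ext _ _ _ _ (@ret R _)) ?bind_ret // => x.
  by congr ret; apply: val_inj.
have Hh := IH HGS (cs_ft HS HTh) H0.
have := cs_q HS HTh Hh.
by rewrite (functional_extensionality _ _ (fun i => @qmor_substI R _ _ H0 H s i)).
Qed.

End Fwd.

Unset Implicit Arguments.

Theorem proposition4p1 (R : monad) (LM : lmodule R)
    (C : forall n, ctx LM n -> Prop)
    (Ct : forall n, ctx LM n -> LM 'I_n -> R 'I_n -> Prop) :
  (exists (Ob : forall n, ctx LM n -> Prop)
          (Hom : forall m n, ctx LM m -> ctx LM n -> mor R m n -> Prop),
      [/\ is_Csubsystem Ob Hom,
          (forall n (G : ctx LM n), Ob n G <-> C n G) &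
          (forall n (G : ctx LM n) T t, Obtilde Hom G T t <-> Ct n G T t)])
  <->
  ((* (1) *) C 0 cnil /\
      (* (2) *) (forall n (G : ctx LM n) T, C n.+1 (csnoc G T) -> C n G) /\
      (* (3) *) (forall n (G : ctx LM n) A a, Ct n G A a -> C n.+1 (csnoc G A)) /\
      (* (4) *) (forall n (G : ctx LM n) T m (Th : ctx LM m) (Th' : ctx LM m.+1) A a,
                   C n.+1 (csnoc G T) -> weakctx G T Th Th' -> Ct m Th A a ->
                   Ct m.+1 Th' (wkLM n A) (wkR n a)) /\
      (* (5) *) (forall n (G : ctx LM n) S s m (H : n <= m)
                   (Th : ctx LM m.+1) (Th' : ctx LM m) A a,
                   Ct n G S s -> substctx G S s Th Th' -> Ct m.+1 Th A a ->
                   Ct m Th' (substLM H s A) (substR H s a)) /\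
      (* (6) *) (forall n (G : ctx LM n) T, C n.+1 (csnoc G T) ->
                   Ct n.+1 (csnoc G T) (wkLM n T) (ret ord_max))).
Proof.
split.
  case=> Ob [Hom [HS HOb HCt]].
  have toOb n (G : ctx LM n) : C n G -> Ob n G by move/HOb.
  have toC n (G : ctx LM n) : Ob n G -> C n G by move/HOb.
  have toT n (G : ctx LM n) T t : Ct n G T t -> Obtilde Hom G T t by move/HCt.
  have toCt n (G : ctx LM n) T t : Obtilde Hom G T t -> Ct n G T t by move/HCt.
  split; first exact/toC/(cs_pt HS).
  split; first by move=> n G T /toOb /(cs_ft HS) /toC.
  split.
    by move=> n G A a /toT [s [Hs _ _]]; apply/toC/(cs_hom_tgt HS Hs).
  split.
    move=> n G T m Th Th' A a /toOb HG Hw /toT HA; apply: toCt.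
    have HTh : Ob m Th by case: HA => s [Hs _ _]; exact: (cs_hom_src HS Hs).
    have [Hw' _] := weak_hom HS Hw HG HTh.
    exact: (L_pullsec HS HA Hw').
  split.
    move=> n G S s m H Th Th' A a /toT HGS Hsub /toT HA; apply: toCt.
    have HTh : Ob m.+1 Th by case: HA => s0 [Hs _ _]; exact: (cs_hom_src HS Hs).
    have Hw := subst_hom HS Hsub HGS HTh H.
    exact: (L_pullsec HS HA Hw).
  move=> n G T /toOb HG; apply: toCt.
  have := L_sec HS HG (cs_id HS HG).
  have -> : Defs.comp (@pmor R n) (@idmor R n.+1) = (fun i => ret (wkI n i)).
    apply: functional_extensionality => i.
    by rewrite /Defs.comp /pmor /idmor bind_retr wkI_incl.
  move=> Hs; exists (secof (@idmor R n.+1)); split => //.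
    exact: secof_p.
  by rewrite secof_last.
case=> h1 [h2 [h3 [h4 [h5 h6]]]].
exists C, (HomB C Ct); split => //.
  exact: (isCs h1 h2 h3 h4 h5 h6).
move=> n G T t; exact: (Obt h2 h3 h4 h6).
Qed.
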